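(* Danzer's configuration $(35_4)$ is isomorphic to an incidence sum $\mathcal C_1\oplus_I\mathcal C_2$ in which $\mathcal C_1$ is (isomorphic to) the Steiner–Plücker configuration $(20_3,15_4)$ and $\mathcal C_2$ is (isomorphic to) the Cayley–Salmon configuration $(15_4,20_3)$.
   Context: Danzer's configuration $(35_4)$: points are the 4-subsets and lines the 3-subsets of $\{1,\dots,7\}$, a point incident with a line iff the line's subset is contained in the point's subset (equivalently, the points and lines in which seven hyperplanes in general position in projective 4-space meet by fours and by threes). Steiner–Plücker configuration: three triangles $A_iB_iC_i$ ($i=1,2,3$) perspective from a common point $O$; for each pair $i<j$ the corresponding sides meet in three points lying on an axis $a_{ij}$, and the three axes meet in a point $Z$. Points: $O$, the 9 vertices, the 9 side-intersection points, $Z$ (20 points); lines: the 3 lines through $O$ and corresponding vertices, the 9 sides, the 3 axes (15 lines), with the natural incidences (4 points per line, 3 lines per point). Cayley–Salmon configuration: three triangles $A_iB_iC_i$ perspective from a common line $\ell$ (corresponding sides of all three meet in three points $X_{AB},X_{BC},X_{CA}$ of $\ell$); for each pair $i<j$ they are perspective from a centre $O_{ij}$, and the three centres lie on a line $m$. Points: 9 vertices, $X_{AB},X_{BC},X_{CA}$, $O_{12},O_{13},O_{23}$ (15 points); lines: $\ell$, 9 sides, the 9 lines joining corresponding vertices, $m$ (20 lines), with the natural incidences (3 points per line, 4 lines per point). Incidence sum: for configurations $\mathcal C_1,\mathcal C_2$ with point sets $\mathcal P_i$ and line sets $\mathcal L_i$, and $I\subseteq\mathcal P_1\times\mathcal L_2\cup\mathcal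 P_2\times\mathcal L_1$, $\mathcal C_1\oplus_I\mathcal C_2$ is the incidence structure on points $\mathcal P_1\sqcup\mathcal P_2$ and lines $\mathcal L_1\sqcup\mathcal L_2$ whose incidences are those of $\mathcal C_1$, those of $\mathcal C_2$, and the pairs in $I$. *)

(* Defs.v *)
From mathcomp Require Import all_boot.
Set Implicit Arguments. Unset Strict Implicit. Unset Printing Implicit Defensive.

Record incstr := IncStr {
  pt : finType;
  ln : finType;
  inc : pt -> ln -> bool }.

Definition isomorphic (C D : incstr) : Prop :=
  exists (f : pt C -> pt D) (g : ln C -> ln D),
    [/\ bijective f, bijective g &
        forall p l, inc p l = inc (f p) (g l)].

(* Incidence sum C1 (+)_I C2, where I is given as a subset of
   P1 x L2 (I12) together with a subset of P2 x L1 (I21). *)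
Definition incsum (C1 C2 : incstr)
  (I12 : pt C1 -> ln C2 -> bool) (I21 : pt C2 -> ln C1 -> bool) : incstr :=
  @IncStr (pt C1 + pt C2)%type (ln C1 + ln C2)%type
    (fun p l => match p, l with
                | inl p1, inl l1 => inc p1 l1
                | inr p2, inr l2 => inc p2 l2
                | inl p1, inr l2 => I12 p1 l2
                | inr p2, inl l1 => I21 p2 l1
                end).

Definition DPt := {A : {set 'I_7} | #|A| == 4}.
Definition DLn := {A : {set 'I_7} | #|A| == 3}.
Definition Danzer : incstr :=
  @IncStr DPt DLn (fun p l => val l \subset val p).

(* ---------- Steiner--Pluecker configuration (20_3, 15_4) ----------
   Triangles are indexed by i : 'I_3, vertices of a triangle by X : 'I_3
   (A,B,C); side k of a triangle is the side opposite to vertex k.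
   A pair {i<j} of triangles is indexed by the remaining index m.
   Points:  inl (inl (inl tt))      = O
            inl (inl (inr (i,X)))   = vertex X of triangle i
            inl (inr (m,k))         = common point of the sides k of the two
                                      triangles of the pair m
            inr tt                  = Z
   Lines:   inl (inl X)             = line through O and the vertices X
            inl (inr (i,k))         = side k of triangle i
            inr m                   = axis of the pair m *)
Definition SPPt := ((unit + ('I_3 * 'I_3)) + ('I_3 * 'I_3) + unit)%type.
Definition SPLn := (('I_3 + ('I_3 * 'I_3)) + 'I_3)%type.
Definition sp_inc (p : SPPt) (l : SPLn) : bool :=
  match p, l with
  | inl (inl (inl _)), inl (inl _) => true
  | inl (inl (inr (i, X))), inl (inl X') => X == X'
  | inl (inl (inr (i, X))), inl (inr (i', k)) => (i == i') && (X != k)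
  | inl (inr (m, k)), inl (inr (i, k')) => (k == k') && (i != m)
  | inl (inr (m, k)), inr m' => m == m'
  | inr _, inr _ => true
  | _, _ => false
  end.
Definition SteinerPlucker : incstr := @IncStr SPPt SPLn sp_inc.

(* ---------- Cayley--Salmon configuration (15_4, 20_3) ----------
   Points:  inl (inl (i,X))   = vertex X of triangle i
            inl (inr k)       = point X_k on l where the sides k meet
            inr m             = centre O_m of perspectivity of the pair m
   Lines:   inl (inl tt)      = the line l
            inl (inr (i,k))   = side k of triangle i
            inr (inl (m,X))   = line joining the vertices X of the pair m
            inr (inr tt)      = the line m through the three centres *)
Definition CSPt := ((('I_3 * 'I_3) + 'I_3) + 'I_3)%type.
Definition CSLn := ((unit + ('I_3 * 'I_3)) + (('I_3 * 'I_3) + unit))%type.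
Definition cs_inc (p : CSPt) (l : CSLn) : bool :=
  match p, l with
  | inl (inl (i, X)), inl (inr (i', k)) => (i == i') && (X != k)
  | inl (inl (i, X)), inr (inl (m, X')) => (X == X') && (i != m)
  | inl (inr k), inl (inl _) => true
  | inl (inr k), inl (inr (_, k')) => k == k'
  | inr m, inr (inl (m', _)) => m == m'
  | inr _, inr (inr _) => true
  | _, _ => false
  end.
Definition CayleySalmon : incstr := @IncStr CSPt CSLn cs_inc.

(* Main.v *)
Require Import Defs.
From mathcomp Require Import all_boot.

Lemma cnt (T : finType) (A : {pred T}) : #|A| = count (mem A) (enum T).
Proof. rewrite cardE /enum_mem size_filter. congr count. symmetry. apply/all_filterP. by apply/allP. Qed.

Definition o0 : 'I_3 := @Ordinal 3 0 erefl.
Definition o1 : 'I_3 := @Ordinal 3 1 erefl.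
Definition o2 : 'I_3 := @Ordinal 3 2 erefl.
Definition os := [:: o0; o1; o2].
Definition pairs := [seq (a, b) | a <- os, b <- os].

Definition X := (SPPt + CSPt)%type.
Definition Y := (SPLn + CSLn)%type.

Definition listP : seq X :=
  [:: inl (inl (inl (inl tt))); inl (inr tt)] ++
  [seq inl (inl (inl (inr q))) | q <- pairs] ++
  [seq inl (inl (inr q)) | q <- pairs] ++
  [seq inr (inl (inl q)) | q <- pairs] ++
  [seq inr (inl (inr k)) | k <- os] ++
  [seq inr (inr k) | k <- os].

Definition listL : seq Y :=
  [:: inr (inl (inl tt)); inr (inr (inr tt))] ++
  [seq inl (inl (inl k)) | k <- os] ++
  [seq inl (inl (inr q)) | q <- pairs] ++
  [seq inl (inr k) | k <- os] ++
  [seq inr (inl (inr q)) | q <- pairs] ++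
  [seq inr (inr (inl q)) | q <- pairs].

Definition mk (s : seq nat) : seq bool := [seq (i \in s) | i <- iota 0 7].
Definition r3 (x : nat) := [seq y <- [:: 0; 1; 2] | y != x].
Definition r345 (x : nat) := [seq y <- [:: 3; 4; 5] | y != x].
Definition r6 (s : seq nat) := [seq y <- [:: 0;1;2;3;4;5] | y \notin s].

Definition G (x : X) : seq bool :=
  match x with
  | inl (inl (inl (inl _))) => mk [:: 0; 1; 2; 6]
  | inl (inl (inl (inr (i, a)))) => mk (r3 a ++ [:: 3 + i; 6])
  | inl (inl (inr (m, k))) => mk (nat_of_ord k :: r345 (3 + m) ++ [:: 6])
  | inl (inr _) => mk [:: 3; 4; 5; 6]
  | inr (inl (inl (i, a))) => mk (r6 [:: nat_of_ord a; 3 + i])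
  | inr (inl (inr k)) => mk [:: nat_of_ord k; 3; 4; 5]
  | inr (inr m) => mk [:: 0; 1; 2; 3 + m]
  end.

Definition Gl (y : Y) : seq bool :=
  match y with
  | inl (inl (inl a)) => mk (r3 a ++ [:: 6])
  | inl (inl (inr (i, k))) => mk [:: nat_of_ord k; 3 + i; 6]
  | inl (inr m) => mk (r345 (3 + m) ++ [:: 6])
  | inr (inl (inl _)) => mk [:: 3; 4; 5]
  | inr (inl (inr (i, k))) => mk (nat_of_ord k :: r345 (3 + i))
  | inr (inr (inl (m, a))) => mk (r3 a ++ [:: 3 + m])
  | inr (inr (inr _)) => mk [:: 0; 1; 2]
  end.

Definition subvec (w v : seq bool) := all2 implb w v.

Definition C1 := SteinerPlucker.
Definition C2 := CayleySalmon.
Definition I12 (p : pt C1) (l : ln C2) := subvec (Gl (inr l)) (G (inl p)).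
Definition I21 (p : pt C2) (l : ln C1) := subvec (Gl (inl l)) (G (inr p)).

Definition dx : X := inl (inl (inl (inl tt))).
Definition dy : Y := inr (inl (inl tt)).
Definition F (v : seq bool) : X := nth dx listP (index v (map G listP)).
Definition Fl (v : seq bool) : Y := nth dy listL (index v (map Gl listL)).

Fixpoint allseqs (n : nat) : seq (seq bool) :=
  if n is n'.+1 then [seq b :: s | b <- [:: true; false], s <- allseqs n'] else [:: [::]].

Lemma allseqsP n (s : seq bool) : size s = n -> s \in allseqs n.
Proof.
elim: n s => [|n IH] [|b s] //= [Hs].
have := IH _ Hs; case: b => Hm.
  by rewrite mem_cat map_f.
by rewrite mem_cat orbC cats0 map_f.
Qed.

Lemma checkP : all (fun v => (count id v == 4) ==> (v \in map G listP)) (allseqs 7).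
Proof. by vm_compute. Qed.
Lemma checkL : all (fun v => (count id v == 3) ==> (v \in map Gl listL)) (allseqs 7).
Proof. by vm_compute. Qed.
Lemma checkI : all (fun x => all (fun y =>
   @inc (incsum I12 I21) x y == subvec (Gl y) (G x)) listL) listP.
Proof. by vm_compute. Qed.
Lemma cardX : #|{: X}| = 35.
Proof. by rewrite /X !card_sum !card_prod !card_ord !card_unit. Qed.
Lemma cardY : #|{: Y}| = 35.
Proof. by rewrite /Y !card_sum !card_prod !card_ord !card_unit. Qed.

Definition vec (A : {set 'I_7}) : seq bool := [seq i \in A | i <- enum 'I_7].

Lemma size_vec A : size (vec A) = 7.
Proof. by rewrite size_map size_enum_ord. Qed.

Lemma count_vec A : count id (vec A) = #|A|.
Proof. by rewrite count_map cnt. Qed.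



Lemma all2_map (T : Type) (a b : T -> bool) s :
  all2 implb (map a s) (map b s) = all (fun x => a x ==> b x) s.
Proof. by elim: s => //= x s ->. Qed.

Lemma subset_vec (A B : {set 'I_7}) : (A \subset B) = subvec (vec A) (vec B).
Proof.
rewrite /subvec /vec all2_map.
apply/subsetP/allP => H x.
  by move=> _; apply/implyP; apply: H.
by move=> Hx; have := H x (mem_enum _ x); rewrite Hx.
Qed.

Lemma subvec_refl w : subvec w w.
Proof. by elim: w => //= b w ->; rewrite implybb. Qed.

Lemma vec_inj A B : vec A = vec B -> A = B.
Proof.
move=> H; apply/eqP; rewrite eqEsubset !subset_vec H.
by rewrite subvec_refl.
Qed.

Lemma GF v : size v = 7 -> count id v = 4 -> G (F v) = v.
Proof.
move=> Hs Hc; have := allP checkP v (@allseqsP _ _ Hs); rewrite Hc /= => Hm.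
rewrite /F -(nth_map dx (G dx)); last by rewrite -(size_map G) index_mem.
exact: nth_index.
Qed.

Lemma GlFl v : size v = 7 -> count id v = 3 -> Gl (Fl v) = v.
Proof.
move=> Hs Hc; have := allP checkL v (@allseqsP _ _ Hs); rewrite Hc /= => Hm.
rewrite /Fl -(nth_map dy (Gl dy)); last by rewrite -(size_map Gl) index_mem.
exact: nth_index.
Qed.

Lemma F_in v : F v \in listP.
Proof.
rewrite /F; case: (ltnP (index v (map G listP)) (size listP)) => H.
  exact: mem_nth.
by rewrite nth_default.
Qed.

Lemma Fl_in v : Fl v \in listL.
Proof.
rewrite /Fl; case: (ltnP (index v (map Gl listL)) (size listL)) => H.
  exact: mem_nth.
by rewrite nth_default.
Qed.

Definition fP (p : DPt) : X := F (vec (val p)).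
Definition fL (l : DLn) : Y := Fl (vec (val l)).

Lemma GfP p : G (fP p) = vec (val p).
Proof. by apply: GF; rewrite ?size_vec // count_vec; apply/eqP; case: p. Qed.
Lemma GlfL l : Gl (fL l) = vec (val l).
Proof. by apply: GlFl; rewrite ?size_vec // count_vec; apply/eqP; case: l. Qed.

Lemma cardDPt : #|{: DPt}| = 35.
Proof.
have E : #|{: DPt}| = 'C(#|'I_7|, 4).
  rewrite /DPt card_sig -card_draws.
  by apply: eq_card => A; rewrite !inE.
by rewrite E card_ord.
Qed.

Lemma cardDLn : #|{: DLn}| = 35.
Proof.
have E : #|{: DLn}| = 'C(#|'I_7|, 3).
  rewrite /DLn card_sig -card_draws.
  by apply: eq_card => A; rewrite !inE.
by rewrite E card_ord.
Qed.

Lemma fP_inj : injective fP.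
Proof.
move=> p q H.
have H2 := etrans (esym (GfP p)) (etrans (congr1 G H) (GfP q)).
apply: val_inj; exact: vec_inj.
Qed.

Lemma fL_inj : injective fL.
Proof.
move=> p q H.
have H2 := etrans (esym (GlfL p)) (etrans (congr1 Gl H) (GlfL q)).
apply: val_inj; exact: vec_inj.
Qed.

Lemma inc_ok (p : DPt) (l : DLn) :
  (val l \subset val p) = @inc (incsum I12 I21) (fP p) (fL l).
Proof.
have := allP (allP checkI _ (F_in (vec (val p)))) _ (Fl_in (vec (val l))).
move/eqP => E.
have E2 : @inc (incsum I12 I21) (fP p) (fL l) = subvec (Gl (fL l)) (G (fP p)) := E.
rewrite E2 (GfP p) (GlfL l).
exact: subset_vec.
Qed.

Theorem theorem4p6 :
  exists (C1 C2 : incstr)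
         (I12 : pt C1 -> ln C2 -> bool) (I21 : pt C2 -> ln C1 -> bool),
    [/\ isomorphic C1 SteinerPlucker,
        isomorphic C2 CayleySalmon &
        isomorphic Danzer (incsum I12 I21)].
Proof.
exists C1, C2, I12, I21; split.
- exists id, id; split; [by exists id | by exists id | by []].
- exists id, id; split; [by exists id | by exists id | by []].
exists fP, fL; split.
- apply: (@inj_card_bij DPt X fP fP_inj).
  by rewrite cardX cardDPt.
- apply: (@inj_card_bij DLn Y fL fL_inj).
  by rewrite cardY cardDLn.
- move=> p l; exact: inc_ok.
Qed.
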